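(* Let $\beta,\delta\in(0,1)$, $K>0$, $d_1,d_2>0$, and let $\eta_1,\eta_2\ge0$ be constants. Consider $$\frac{df}{dt}=\tfrac12 fm\beta L-\delta f-\eta_1\frac{f}{f+d_1},\qquad \frac{dm}{dt}=\tfrac12 fm\beta L-\delta m+\eta_2\frac{m}{m+d_2},\qquad L=1-\frac{f+m}{K}.$$ If $\beta K<2\delta+\frac{\eta_1}{K+d_1}-\frac{\eta_2}{d_2}$ and $\delta>\frac{\eta_2}{d_2}$, then the trivial equilibrium $(0,0)$ is globally asymptotically stable.
   Context: $f,m$ are female and male densities, with populations considered in the region $0\le f,m$, $f+m\le K$. The model uses saturating female harvesting and male stocking. *)

(* Defs.v *)
From Stdlib Require Import Reals.
From Coquelicot Require Import Coquelicot.
Open Scope R_scope.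

Definition Lfun (K f m : R) : R := 1 - (f + m) / K.

Definition rhs_f (beta delta K d1 eta1 : R) (f m : R) : R :=
  / 2 * f * m * beta * Lfun K f m - delta * f - eta1 * (f / (f + d1)).
Definition rhs_m (beta delta K d2 eta2 : R) (f m : R) : R :=
  / 2 * f * m * beta * Lfun K f m - delta * m + eta2 * (m / (m + d2)).

Definition in_region (K f m : R) : Prop := 0 <= f /\ 0 <= m /\ f + m <= K.

Definition is_solution (beta delta K d1 d2 eta1 eta2 : R) (f m : R -> R) : Prop :=
  filterlim f (at_right 0) (locally (f 0)) /\
  filterlim m (at_right 0) (locally (m 0)) /\
  (forall t, 0 < t ->
     is_derive f t (rhs_f beta delta K d1 eta1 (f t) (m t)) /\
     is_derive m t (rhs_m beta delta K d2 eta2 (f t) (m t))).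

Definition eucl (x y : R) : R := sqrt (x ^ 2 + y ^ 2).

Definition GAS_origin (beta delta K d1 d2 eta1 eta2 : R) : Prop :=
  rhs_f beta delta K d1 eta1 0 0 = 0 /\ rhs_m beta delta K d2 eta2 0 0 = 0 /\
  (forall eps, 0 < eps -> exists r, 0 < r /\
     forall f m : R -> R, is_solution beta delta K d1 d2 eta1 eta2 f m ->
       in_region K (f 0) (m 0) -> eucl (f 0) (m 0) < r ->
       forall t, 0 <= t -> eucl (f t) (m t) < eps) /\
  (forall f m : R -> R, is_solution beta delta K d1 d2 eta1 eta2 f m ->
     in_region K (f 0) (m 0) ->
     is_lim f p_infty 0 /\ is_lim m p_infty 0).

(* Main.v *)
Require Import Defs.
From Stdlib Require Import Reals Lra Psatz Classical.
From Coquelicot Require Import Coquelicot.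
Open Scope R_scope.

Definition RC (h : R -> R) (a : R) := filterlim h (at_right a) (locally (h a)).

Lemma RC_of_cont (h : R -> R) (a : R) : continuous h a -> RC h a.
Proof.
  intros Hc. unfold RC. eapply filterlim_filter_le_1; [|exact Hc].
  intros P HP. unfold at_right, within. apply filter_imp with (2 := HP). auto.
Qed.

Lemma RC_of_derive (h : R -> R) (a d : R) : is_derive h a d -> RC h a.
Proof. intros H. apply RC_of_cont. apply (ex_derive_continuous (K:=R_AbsRing) (V:=R_NormedModule)). exists d; exact H. Qed.

Lemma RC_eps h a : RC h a -> forall eps, 0 < eps -> exists del, 0 < del /\
  forall t, a < t < a + del -> Rabs (h t - h a) < eps.
Proof.
  intros H eps He. destruct (proj1 (filterlim_locally _ _) H (mkposreal eps He)) as [d Hd].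
  exists d. split; [apply cond_pos|]. intros t Ht.
  assert (B : ball a d t).
  { unfold ball; simpl; unfold AbsRing_ball, abs, minus, plus, opp; simpl. rewrite Rabs_right; lra. }
  specialize (Hd t B (proj1 Ht)). unfold ball in Hd; simpl in Hd;
  unfold AbsRing_ball, abs, minus, plus, opp in Hd; simpl in Hd. exact Hd.
Qed.

Lemma cont_eps (h : R -> R) (a d : R) : is_derive h a d -> forall eps, 0 < eps -> exists del, 0 < del /\
  forall t, Rabs (t - a) < del -> Rabs (h t - h a) < eps.
Proof.
  intros H eps He. assert (Hc : continuous h a) by (apply (ex_derive_continuous (K:=R_AbsRing) (V:=R_NormedModule)); exists d; exact H).
  destruct (proj1 (filterlim_locally _ _) Hc (mkposreal eps He)) as [del Hd].
  exists del. split; [apply cond_pos|]. intros t Ht.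
  assert (B : ball a del t).
  { unfold ball; simpl; unfold AbsRing_ball, abs, minus, plus, opp; simpl. exact Ht. }
  specialize (Hd t B). unfold ball in Hd; simpl in Hd;
  unfold AbsRing_ball, abs, minus, plus, opp in Hd; simpl in Hd. exact Hd.
Qed.

Lemma RC_mult u v a : RC u a -> RC v a -> RC (fun t => u t * v t) a.
Proof.
  intros Hu Hv. unfold RC.
  apply (filterlim_comp_2 u v Rmult Hu Hv). apply (filterlim_mult (K:=R_AbsRing)).
Qed.

Lemma RC_plus u v a : RC u a -> RC v a -> RC (fun t => u t + v t) a.
Proof.
  intros Hu Hv. unfold RC.
  apply (filterlim_comp_2 u v Rplus Hu Hv). apply (filterlim_plus (V:=R_NormedModule)).
Qed.

Lemma RC_opp u a : RC u a -> RC (fun t => - u t) a.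
Proof.
  intros Hu. unfold RC. eapply filterlim_comp; [exact Hu|]. apply (filterlim_opp (V:=R_NormedModule)).
Qed.

Lemma RC_const c a : RC (fun _ => c) a.
Proof. unfold RC. apply filterlim_const. Qed.

Lemma RC_exp k a : RC (fun t => exp (k * t)) a.
Proof. apply RC_of_cont. apply (ex_derive_continuous (K:=R_AbsRing) (V:=R_NormedModule)). auto_derive. auto. Qed.

Lemma der_mexp u t du k : is_derive u t du ->
  is_derive (fun s => u s * exp (k * s)) t (du * exp (k * t) + u t * (k * exp (k * t))).
Proof.
  intros H. assert (He : is_derive (fun s => exp (k * s)) t (k * exp (k * t))).
  { auto_derive. auto. ring. }
  apply (is_derive_mult u (fun s => exp (k*s)) t du _ H He). intros; apply Rmult_comm.
Qed.
Lemma mono (h dh : R -> R) a b : a < b ->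
  (forall t, a < t <= b -> is_derive h t (dh t)) ->
  (forall t, a < t <= b -> dh t <= 0) -> RC h a -> h b <= h a.
Proof.
  intros Hab Hd Hn Hc.
  assert (Hu : forall u, a < u <= b -> h b <= h u).
  { intros u Hu. destruct (Req_dec u b) as [->|Hne]; [lra|].
    destruct (MVT_cor2 h dh u b) as [c [Hc1 Hc2]]; [lra| |].
    - intros c Hc'. apply is_derive_Reals. apply Hd. lra.
    - assert (dh c <= 0) by (apply Hn; lra). nra. }
  destruct (Rle_or_lt (h b) (h a)) as [H|H]; [exact H|].
  destruct (RC_eps h a Hc (h b - h a)) as [del [Hdel Hdd]]; [lra|].
  set (u := a + Rmin del (b - a) / 2).
  assert (Hm1 : 0 < Rmin del (b - a)) by (apply Rmin_glb_lt; lra).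
  assert (Hm2 : Rmin del (b - a) <= del) by apply Rmin_l.
  assert (Hm3 : Rmin del (b - a) <= b - a) by apply Rmin_r.
  specialize (Hdd u). specialize (Hu u).
  assert (Hx : Rabs (h u - h a) < h b - h a) by (apply Hdd; unfold u; lra).
  assert (Hy : h b <= h u) by (apply Hu; unfold u; lra).
  apply Rabs_def2 in Hx. lra.
Qed.

Lemma barrier (y dy : R -> R) a b : a < b ->
  (forall t, a < t <= b -> is_derive y t (dy t)) ->
  (forall t, a < t <= b -> 0 <= y t -> dy t <= 0) -> RC y a -> y a <= 0 -> y b <= 0.
Proof.
  intros Hab Hd Hn Hc Ha.
  destruct (Rle_or_lt (y b) 0) as [H|Hyb]; [exact H|]. exfalso.
  set (E := fun t => a <= t <= b /\ y t <= 0).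
  destruct (completeness E) as [s [Hub Hlub]].
  { exists b. intros t [Ht _]. lra. }
  { exists a. split; [lra|exact Ha]. }
  assert (Has : a <= s) by (apply Hub; split; [lra|exact Ha]).
  assert (Hsb : s <= b) by (apply Hlub; intros t [Ht _]; lra).
  assert (Hys : y s <= 0).
  { destruct (Req_dec s a) as [->|Hne]; [exact Ha|].
    destruct (Rle_or_lt (y s) 0) as [H|H]; [exact H|].
    destruct (cont_eps y s (dy s) (Hd s ltac:(lra)) (y s) H) as [del [Hdel Hdd]].
    assert (Hex : exists t, E t /\ s - del < t).
    { apply NNPP. intros Hno.
      assert (s <= s - del); [|lra].
      apply Hlub. intros t Et. destruct (Rle_or_lt t (s - del)) as [?|Hlt]; [auto|].
      exfalso; apply Hno; exists t; auto. }
    destruct Hex as [t [[Ht1 Ht2] Ht3]].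
    assert (t <= s) by (apply Hub; split; auto).
    assert (Rabs (y t - y s) < y s) by (apply Hdd; rewrite Rabs_left1; lra).
    apply Rabs_def2 in H1. lra. }
  assert (Hsb' : s < b) by (destruct (Req_dec s b) as [->|]; lra).
  assert (Hpos : forall t, s < t <= b -> 0 < y t).
  { intros t Ht. destruct (Rle_or_lt (y t) 0) as [H|H]; [|exact H].
    assert (t <= s) by (apply Hub; split; [lra|exact H]). lra. }
  assert (Hrc : RC y s).
  { destruct (Req_dec s a) as [->|Hne]; [exact Hc|]. apply (RC_of_derive y s (dy s)). apply Hd; lra. }
  assert (y b <= y s); [|lra].
  apply (mono y dy s b Hsb').
  - intros t Ht; apply Hd; lra.
  - intros t Ht; apply Hn; [lra|]. left; apply Hpos; lra.
  - exact Hrc.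
Qed.

Lemma cont_ind (P : R -> Prop) : P 0 ->
  (forall T, 0 <= T -> (forall s, 0 <= s <= T -> P s) -> exists del, 0 < del /\ forall s, T <= s <= T + del -> P s) ->
  (forall T, 0 < T -> (forall s, 0 <= s < T -> P s) -> P T) ->
  forall t, 0 <= t -> P t.
Proof.
  intros H0 Hext Hcl t1 Ht1. apply NNPP. intros Hn1.
  set (E := fun t => 0 <= t /\ forall s, 0 <= s <= t -> P s).
  destruct (completeness E) as [T [Hub Hlub]].
  { exists t1. intros t [Ht Hs]. destruct (Rle_or_lt t t1) as [|Hlt]; [auto|].
    exfalso; apply Hn1, Hs; lra. }
  { exists 0. split; [lra|]. intros s Hs. replace s with 0 by lra. exact H0. }
  assert (HT0 : 0 <= T) by (apply Hub; split; [lra|]; intros s Hs; replace s with 0 by lra; exact H0).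
  assert (Hbelow : forall s, 0 <= s < T -> P s).
  { intros s Hs. apply NNPP. intros Hns.
    assert (T <= s); [|lra]. apply Hlub. intros t [Ht Hts].
    destruct (Rle_or_lt t s) as [|Hlt]; [auto|]. exfalso; apply Hns, Hts; lra. }
  assert (HPT : P T).
  { destruct (Req_dec T 0) as [->|Hne]; [exact H0|]. apply Hcl; [lra|exact Hbelow]. }
  assert (HE : forall s, 0 <= s <= T -> P s).
  { intros s Hs. destruct (Req_dec s T) as [->|]; [exact HPT|]. apply Hbelow; lra. }
  destruct (Hext T HT0 HE) as [del [Hdel Hd]].
  assert (T + del <= T); [|lra].
  apply Hub. split; [lra|]. intros s Hs.
  destruct (Rle_or_lt s T); [apply HE; lra|apply Hd; lra].
Qed.
Lemma is_derive_eq (h : R -> R) t d d' : is_derive h t d -> d = d' -> is_derive h t d'.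
Proof. intros H <-; exact H. Qed.

Lemma closed_le (g : R -> R) T d : 0 < T -> is_derive g T d ->
  (forall s, 0 <= s < T -> g s <= 0) -> g T <= 0.
Proof.
  intros HT Hd Hs. destruct (Rle_or_lt (g T) 0) as [H|H]; [exact H|].
  destruct (cont_eps g T d Hd (g T) H) as [del [Hdel Hdd]].
  set (s := T - Rmin del T / 2).
  assert (0 < Rmin del T) by (apply Rmin_glb_lt; lra).
  assert (Rmin del T <= del) by apply Rmin_l.
  assert (Rmin del T <= T) by apply Rmin_r.
  assert (Hx : Rabs (g s - g T) < g T) by (apply Hdd; unfold s; rewrite Rabs_left1; lra).
  assert (g s <= 0) by (apply Hs; unfold s; lra).
  apply Rabs_def2 in Hx. lra.
Qed.

Lemma pos_inv (u g : R -> R) M T s : T < s ->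
  (forall t, T < t <= s -> is_derive u t (u t * g t)) ->
  (forall t, T < t <= s -> g t <= M) -> RC u T -> 0 <= u T -> 0 <= u s.
Proof.
  intros HTs Hd Hg Hrc H0.
  set (y := fun t => (- u t) * exp ((- M) * t)).
  set (dy := fun t => (- (u t * g t)) * exp ((- M) * t) + (- u t) * ((- M) * exp ((- M) * t))).
  assert (y s <= 0).
  { apply (barrier y dy T s HTs).
    - intros t Ht. unfold y, dy. apply (der_mexp (fun t => - u t)).
      apply (is_derive_opp (K:=R_AbsRing) (V:=R_NormedModule) u t _ (Hd t Ht)).
    - intros t Ht Hy. unfold y in Hy. unfold dy.
      pose proof (exp_pos ((- M) * t)). pose proof (Hg t Ht).
      assert (u t <= 0).
      { destruct (Rle_or_lt (u t) 0); [auto|]. nra. }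
      replace ((- (u t * g t)) * exp ((- M) * t) + (- u t) * ((- M) * exp ((- M) * t)))
        with (u t * (M - g t) * exp ((- M) * t)) by ring.
      assert (0 <= - u t * (M - g t)) by nra. nra.
    - unfold y. apply RC_mult; [apply RC_opp; exact Hrc|apply RC_exp].
    - unfold y. pose proof (exp_pos ((- M) * T)). nra. }
  unfold y in H. pose proof (exp_pos ((- M) * s)).
  destruct (Rle_or_lt 0 (u s)); [auto|]. nra.
Qed.

Lemma gf_bound beta delta K d1 eta1 f m : 0 < beta < 1 -> 0 < delta -> 0 < K -> 0 <= eta1 ->
  Rabs f <= K + 1 -> Rabs m <= K + 1 -> 0 < f + d1 ->
  / 2 * m * beta * Lfun K f m - delta - eta1 * / (f + d1) <= (K+1) * (1 + (2*K+2)/K).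
Proof.
  intros Hb Hd HK He Hf Hm Hfd. unfold Lfun.
  set (L := 1 - (f + m) / K).
  assert (HL : Rabs L <= 1 + (2*K+2)/K).
  { unfold L. eapply Rle_trans; [apply Rabs_triang|]. rewrite Rabs_Ropp, Rabs_R1.
    unfold Rdiv. rewrite Rabs_mult, (Rabs_right (/K)) by (left; apply Rinv_0_lt_compat; lra).
    apply Rplus_le_compat_l. apply Rmult_le_compat_r; [left; apply Rinv_0_lt_compat; lra|].
    eapply Rle_trans; [apply Rabs_triang|]. lra. }
  assert (HX : m * beta * L <= (K+1) * (1 + (2*K+2)/K)).
  { eapply Rle_trans; [apply Rle_abs|]. rewrite !Rabs_mult, (Rabs_right beta) by lra.
    assert (0 <= Rabs m) by apply Rabs_pos. assert (0 <= Rabs L) by apply Rabs_pos.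
    assert (Rabs m * beta <= K + 1) by nra.
    apply Rmult_le_compat; nra. }
  assert (0 <= eta1 * / (f + d1)) by (apply Rmult_le_pos; [lra|left; apply Rinv_0_lt_compat; lra]).
  assert (0 <= (K+1) * (1 + (2*K+2)/K)).
  { apply Rmult_le_pos; [lra|]. assert (0 <= (2*K+2)/K) by (apply Rdiv_le_0_compat; lra). lra. }
  replace (/ 2 * m * beta * L) with (/2 * (m * beta * L)) by ring. lra.
Qed.
Lemma gm_bound beta delta K d2 eta2 f m : 0 < beta < 1 -> 0 < delta -> 0 < K -> 0 < d2 -> 0 <= eta2 ->
  Rabs f <= K + 1 -> Rabs m <= K + 1 -> d2 / 2 <= m + d2 ->
  / 2 * f * beta * Lfun K f m - delta + eta2 * / (m + d2) <= (K+1) * (1 + (2*K+2)/K) + 2 * eta2 / d2.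
Proof.
  intros Hb Hd HK Hd2 He Hf Hm Hmd.
  pose proof (gf_bound beta delta K d2 0 m f Hb Hd HK (Rle_refl 0) Hm Hf ltac:(lra)) as H.
  assert (E : Lfun K m f = Lfun K f m) by (unfold Lfun; f_equal; f_equal; ring).
  rewrite E in H.
  assert (Hi : / (m + d2) <= 2 / d2).
  { replace (2 / d2) with (/ (d2 / 2)) by (field; lra). apply Rinv_le_contravar; lra. }
  assert (eta2 * / (m + d2) <= 2 * eta2 / d2).
  { replace (2 * eta2 / d2) with (eta2 * (2 / d2)) by (field; lra). apply Rmult_le_compat_l; lra. }
  lra.
Qed.

Lemma rhs_f_eq beta delta K d1 eta1 f m :
  rhs_f beta delta K d1 eta1 f m = f * (/ 2 * m * beta * Lfun K f m - delta - eta1 * / (f + d1)).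
Proof. unfold rhs_f, Rdiv. ring. Qed.
Lemma rhs_m_eq beta delta K d2 eta2 f m :
  rhs_m beta delta K d2 eta2 f m = m * (/ 2 * f * beta * Lfun K f m - delta + eta2 * / (m + d2)).
Proof. unfold rhs_m, Rdiv. ring. Qed.

Lemma boundary_neg beta delta K d1 d2 eta1 eta2 f m : 0 < beta -> 0 < delta -> 0 < K -> 0 < d1 -> 0 < d2 ->
  0 <= eta1 -> 0 <= eta2 -> delta > eta2 / d2 -> 0 <= f -> 0 <= m -> K <= f + m ->
  rhs_f beta delta K d1 eta1 f m + rhs_m beta delta K d2 eta2 f m <= 0.
Proof.
  intros Hb Hd HK Hd1 Hd2 He1 He2 Hdel Hf Hm Hs. unfold rhs_f, rhs_m.
  assert (HL : Lfun K f m <= 0).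
  { unfold Lfun. assert (1 <= (f+m)/K); [|lra]. apply (Rmult_le_reg_r K); [lra|].
    unfold Rdiv; rewrite Rmult_assoc, Rinv_l by lra. lra. }
  assert (0 <= f * m * beta) by (apply Rmult_le_pos; [apply Rmult_le_pos|]; lra).
  assert (f * m * beta * Lfun K f m <= 0) by nra.
  assert (0 <= eta1 * (f / (f + d1))) by (apply Rmult_le_pos; [lra|apply Rdiv_le_0_compat; lra]).
  assert (eta2 * (m / (m + d2)) <= delta * m).
  { assert (m / (m + d2) <= m / d2).
    { unfold Rdiv. apply Rmult_le_compat_l; [lra|]. apply Rinv_le_contravar; lra. }
    assert (eta2 * (m / d2) = (eta2 / d2) * m) by (field; lra).
    assert (eta2 * (m / (m + d2)) <= eta2 * (m / d2)) by (apply Rmult_le_compat_l; lra).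
    nra. }
  replace (/ 2 * f * m * beta * Lfun K f m) with (/2 * (f * m * beta * Lfun K f m)) by ring.
  nra.
Qed.

Lemma RC_sol (f : R -> R) df T : filterlim f (at_right 0) (locally (f 0)) ->
  (forall t, 0 < t -> is_derive f t (df t)) -> 0 <= T -> RC f T.
Proof.
  intros H0 Hd HT. destruct (Req_dec T 0) as [->|Hne]; [exact H0|].
  apply (RC_of_derive f T (df T)). apply Hd; lra.
Qed.
Lemma invariance beta delta K d1 d2 eta1 eta2 (f m : R -> R) :
  0 < beta < 1 -> 0 < delta -> 0 < K -> 0 < d1 -> 0 < d2 ->
  0 <= eta1 -> 0 <= eta2 -> delta > eta2 / d2 ->
  is_solution beta delta K d1 d2 eta1 eta2 f m -> in_region K (f 0) (m 0) ->
  forall t, 0 <= t -> in_region K (f t) (m t).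
Proof.
  intros Hb Hd HK Hd1 Hd2 He1 He2 Hdel [Hf0 [Hm0 Hder]] Hr0.
  set (rf := fun t => rhs_f beta delta K d1 eta1 (f t) (m t)).
  set (rm := fun t => rhs_m beta delta K d2 eta2 (f t) (m t)).
  assert (Df : forall t, 0 < t -> is_derive f t (rf t)) by (intros t Ht; apply (Hder t Ht)).
  assert (Dm : forall t, 0 < t -> is_derive m t (rm t)) by (intros t Ht; apply (Hder t Ht)).
  assert (Ds : forall t, 0 < t -> is_derive (fun s => f s + m s - K) t (rf t + rm t)).
  { intros t Ht. eapply is_derive_eq.
    - apply (is_derive_minus (K:=R_AbsRing) (V:=R_NormedModule) (fun s => f s + m s) (fun _ => K)).
      + apply (is_derive_plus (K:=R_AbsRing) (V:=R_NormedModule)); [apply Df|apply Dm]; lra.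
      + apply (is_derive_const (K:=R_AbsRing) (V:=R_NormedModule)).
    - unfold minus, plus, opp, zero; simpl. ring. }
  apply cont_ind.
  - exact Hr0.
  -
    intros T HT HE. assert (HrT : in_region K (f T) (m T)) by (apply HE; lra).
    destruct HrT as [HfT [HmT HsT]].
    set (rho := Rmin 1 (Rmin (d1/2) (d2/2))).
    assert (Hrho : 0 < rho) by (unfold rho; repeat apply Rmin_glb_lt; lra).
    assert (Hr1 : rho <= 1) by apply Rmin_l.
    assert (Hr2 : rho <= d1/2) by (eapply Rle_trans; [apply Rmin_r|apply Rmin_l]).
    assert (Hr3 : rho <= d2/2) by (eapply Rle_trans; [apply Rmin_r|apply Rmin_r]).
    destruct (RC_eps f T (RC_sol f rf T Hf0 Df HT) rho Hrho) as [df [Hdf Hf]].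
    destruct (RC_eps m T (RC_sol m rm T Hm0 Dm HT) rho Hrho) as [dm [Hdm Hm]].
    set (del := Rmin df dm / 2).
    assert (Hdl : 0 < Rmin df dm) by (apply Rmin_glb_lt; lra).
    assert (Hdl1 : Rmin df dm <= df) by apply Rmin_l.
    assert (Hdl2 : Rmin df dm <= dm) by apply Rmin_r.
    exists del. split; [unfold del; lra|].
    assert (Bf : forall t, T < t <= T + del -> - rho < f t - f T < rho).
    { intros t Ht. assert (H: Rabs (f t - f T) < rho) by (apply Hf; unfold del in Ht; lra). apply Rabs_def2 in H. lra. }
    assert (Bm : forall t, T < t <= T + del -> - rho < m t - m T < rho).
    { intros t Ht. assert (H: Rabs (m t - m T) < rho) by (apply Hm; unfold del in Ht; lra). apply Rabs_def2 in H. lra. }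
    assert (Pf : forall s, T < s <= T + del -> 0 <= f s).
    { intros s Hs.
      apply (pos_inv f (fun t => / 2 * m t * beta * Lfun K (f t) (m t) - delta - eta1 * / (f t + d1))
                     ((K+1) * (1 + (2*K+2)/K)) T s); [lra| | |apply (RC_sol f rf T Hf0 Df HT)|exact HfT].
      - intros t Ht. eapply is_derive_eq; [apply Df; lra|]. unfold rf. apply rhs_f_eq.
      - intros t Ht. specialize (Bf t ltac:(lra)). specialize (Bm t ltac:(lra)).
        apply gf_bound; auto; try lra; apply Rabs_le; lra. }
    assert (Pm : forall s, T < s <= T + del -> 0 <= m s).
    { intros s Hs.
      apply (pos_inv m (fun t => / 2 * f t * beta * Lfun K (f t) (m t) - delta + eta2 * / (m t + d2))
                     ((K+1) * (1 + (2*K+2)/K) + 2 * eta2 / d2) T s); [lra| | |apply (RC_sol m rm T Hm0 Dm HT)|exact HmT].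
      - intros t Ht. eapply is_derive_eq; [apply Dm; lra|]. unfold rm. apply rhs_m_eq.
      - intros t Ht. specialize (Bf t ltac:(lra)). specialize (Bm t ltac:(lra)).
        apply gm_bound; auto; try lra; apply Rabs_le; lra. }
    intros s Hs. destruct (Req_dec s T) as [->|Hne]; [split; [|split]; assumption|].
    split; [apply Pf; lra|]. split; [apply Pm; lra|].
    assert (f s + m s - K <= 0); [|lra].
    apply (barrier (fun s => f s + m s - K) (fun t => rf t + rm t) T s); [lra| | | |lra].
    + intros t Ht. apply Ds. lra.
    + intros t Ht Hy. unfold rf, rm. apply boundary_neg; try lra; [apply Pf|apply Pm]; lra.
    + apply RC_plus; [apply RC_plus|apply RC_const].
      * apply (RC_sol f rf T Hf0 Df HT).
      * apply (RC_sol m rm T Hm0 Dm HT).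
  -
    intros T HT Hb4.
    split; [|split].
    + assert (- f T <= 0); [|lra].
      apply (closed_le (fun s => - f s) T (opp (rf T)) HT).
      * apply (is_derive_opp (K:=R_AbsRing) (V:=R_NormedModule)). apply Df; lra.
      * intros s Hs. destruct (Hb4 s Hs) as [? _]. lra.
    + assert (- m T <= 0); [|lra].
      apply (closed_le (fun s => - m s) T (opp (rm T)) HT).
      * apply (is_derive_opp (K:=R_AbsRing) (V:=R_NormedModule)). apply Dm; lra.
      * intros s Hs. destruct (Hb4 s Hs) as [_ [? _]]. lra.
    + assert (f T + m T - K <= 0); [|lra].
      apply (closed_le (fun s => f s + m s - K) T (rf T + rm T) HT (Ds T HT)).
      intros s Hs. destruct (Hb4 s Hs) as [_ [_ ?]]. lra.
Qed.
Lemma lim0 (g : R -> R) V0 c : 0 <= V0 -> 0 < c ->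
  (forall t, 0 <= t -> 0 <= g t <= V0 * exp (- c * t)) -> is_lim g p_infty 0.
Proof.
  intros HV Hc Hg. apply is_lim_spec. intros eps. simpl.
  set (q := eps / (V0 + 1)).
  assert (Hq : 0 < q) by (unfold q; apply Rdiv_lt_0_compat; [apply cond_pos|lra]).
  exists (Rmax 0 (- ln q / c)). intros t Ht.
  pose proof (Rmax_l 0 (- ln q / c)). pose proof (Rmax_r 0 (- ln q / c)).
  assert (Ht0 : 0 <= t) by lra.
  assert (H1 : - ln q / c < t) by lra.
  assert (H2 : - c * t < ln q).
  { apply (Rmult_lt_compat_r c) in H1; [|lra]. unfold Rdiv in H1.
    rewrite Rmult_assoc, Rinv_l in H1 by lra. lra. }
  assert (H3 : exp (- c * t) < q) by (rewrite <- (exp_ln q Hq); apply exp_increasing; exact H2).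
  destruct (Hg t Ht0) as [Ha Hb].
  pose proof (exp_pos (- c * t)).
  assert (Hqe : q * (V0 + 1) = eps) by (unfold q; field; lra).
  rewrite Rminus_0_r, Rabs_right by lra.
  assert ((V0 + 1) * exp (- c * t) < (V0 + 1) * q) by (apply Rmult_lt_compat_l; lra).
  pose proof (cond_pos eps). nra.
Qed.

Lemma decay_point beta delta K d1 d2 eta1 eta2 f m : 0 < beta < 1 -> 0 < delta -> 0 < K -> 0 < d1 -> 0 < d2 ->
  0 <= eta1 -> 0 <= eta2 ->
  let A := delta + eta1 / (K + d1) in let B := delta - eta2 / d2 in
  let c := Rmin A (Rmin B ((A + B - beta * K) / 2)) in
  0 < B -> beta * K < A + B ->
  in_region K f m ->
  rhs_f beta delta K d1 eta1 f m + rhs_m beta delta K d2 eta2 f m <= - c * (f + m).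
Proof.
  intros Hb Hd HK Hd1 Hd2 He1 He2 A B c HB HAB [Hf [Hm Hs]].
  assert (HA : 0 < A) by (unfold A; assert (0 <= eta1 / (K + d1)) by (apply Rdiv_le_0_compat; lra); lra).
  assert (Hc1 : c <= A) by apply Rmin_l.
  assert (Hc2 : c <= B) by (eapply Rle_trans; [apply Rmin_r|apply Rmin_l]).
  assert (Hc3 : c <= (A + B - beta * K) / 2) by (eapply Rle_trans; [apply Rmin_r|apply Rmin_r]).
  unfold rhs_f, rhs_m.
  assert (HL : Lfun K f m <= 1).
  { unfold Lfun. assert (0 <= (f+m)/K) by (apply Rdiv_le_0_compat; lra). lra. }
  assert (H1 : f * m * beta * Lfun K f m <= beta * f * m).
  { assert (0 <= f * m * beta) by (apply Rmult_le_pos; [apply Rmult_le_pos|]; lra). nra. }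
  assert (H2 : eta1 / (K + d1) * f <= eta1 * (f / (f + d1))).
  { unfold Rdiv. rewrite (Rmult_comm f), <- Rmult_assoc. apply Rmult_le_compat_r; [lra|].
    apply Rmult_le_compat_l; [lra|]. apply Rinv_le_contravar; lra. }
  assert (H3 : eta2 * (m / (m + d2)) <= eta2 / d2 * m).
  { unfold Rdiv. rewrite (Rmult_comm m), <- Rmult_assoc. apply Rmult_le_compat_r; [lra|].
    apply Rmult_le_compat_l; [lra|]. apply Rinv_le_contravar; lra. }
  assert (H4 : beta * f * m <= (A - c) * f + (B - c) * m).
  { clear H1 H2 H3 HL. clearbody A B c.
    assert (Hk : beta * K <= A + B - 2 * c) by lra.
    destruct (Rle_or_lt f m) as [Hfm|Hfm].
    - assert (beta * f * m <= beta * K * f) by (assert (m <= K) by lra; assert (0 <= beta * f) by nra; nra).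
      assert (beta * K * f <= (A + B - 2 * c) * f) by (apply Rmult_le_compat_r; lra). nra.
    - assert (beta * f * m <= beta * K * m) by (assert (f <= K) by lra; assert (0 <= beta * m) by nra; nra).
      assert (beta * K * m <= (A + B - 2 * c) * m) by (apply Rmult_le_compat_r; lra). nra. }
  replace (/ 2 * f * m * beta * Lfun K f m) with (/2 * (f * m * beta * Lfun K f m)) by ring.
  unfold A, B in *. lra.
Qed.
Lemma decay (f m dV : R -> R) c V0 : 
  filterlim f (at_right 0) (locally (f 0)) -> filterlim m (at_right 0) (locally (m 0)) ->
  (forall t, 0 < t -> is_derive (fun s => f s + m s) t (dV t)) ->
  (forall t, 0 < t -> dV t <= - c * (f t + m t)) -> V0 = f 0 + m 0 ->
  forall t, 0 <= t -> f t + m t <= V0 * exp (- c * t).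
Proof.
  intros Hf0 Hm0 Hd Hn HV t Ht.
  destruct (Req_dec t 0) as [->|Hne].
  { rewrite Rmult_0_r, exp_0, HV. lra. }
  set (W := fun s => (f s + m s) * exp (c * s)).
  assert (W t <= W 0).
  { apply (mono W (fun s => dV s * exp (c * s) + (f s + m s) * (c * exp (c * s))) 0 t); [lra| | |].
    - intros s Hs. unfold W. apply (der_mexp (fun s => f s + m s)). apply Hd. lra.
    - intros s Hs. pose proof (exp_pos (c * s)). specialize (Hn s ltac:(lra)).
      replace (dV s * exp (c * s) + (f s + m s) * (c * exp (c * s)))
        with ((dV s + c * (f s + m s)) * exp (c * s)) by ring.
      assert (dV s + c * (f s + m s) <= 0) by lra. nra.
    - unfold W. apply RC_mult; [apply RC_plus; assumption|apply RC_exp]. }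
  unfold W in H. rewrite Rmult_0_r, exp_0, Rmult_1_r, <- HV in H.
  assert (E : exp (c * t) * exp (- c * t) = 1) by (rewrite <- exp_plus; replace (c * t + - c * t) with 0 by ring; apply exp_0).
  pose proof (exp_pos (- c * t)).
  assert ((f t + m t) * exp (c * t) * exp (- c * t) <= V0 * exp (- c * t)) by (apply Rmult_le_compat_r; lra).
  rewrite Rmult_assoc, E, Rmult_1_r in H1. exact H1.
Qed.

Theorem mainTheorem10 (beta delta K d1 d2 eta1 eta2 : R) :
  0 < beta < 1 -> 0 < delta < 1 -> 0 < K -> 0 < d1 -> 0 < d2 ->
  0 <= eta1 -> 0 <= eta2 ->
  beta * K < 2 * delta + eta1 / (K + d1) - eta2 / d2 ->
  delta > eta2 / d2 ->
  GAS_origin beta delta K d1 d2 eta1 eta2.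
Proof.
  intros Hb Hd HK Hd1 Hd2 He1 He2 Hcond Hdel.
  set (A := delta + eta1 / (K + d1)). set (B := delta - eta2 / d2).
  set (c := Rmin A (Rmin B ((A + B - beta * K) / 2))).
  assert (HB : 0 < B) by (unfold B; lra).
  assert (HAB : beta * K < A + B) by (unfold A, B; lra).
  assert (HA : 0 < A) by (unfold A; assert (0 <= eta1 / (K + d1)) by (apply Rdiv_le_0_compat; lra); lra).
  assert (Hc : 0 < c) by (unfold c; repeat apply Rmin_glb_lt; lra).
  assert (KEY : forall f m, is_solution beta delta K d1 d2 eta1 eta2 f m -> in_region K (f 0) (m 0) ->
     forall t, 0 <= t -> in_region K (f t) (m t) /\ f t + m t <= (f 0 + m 0) * exp (- c * t)).
  { intros f m Hsol Hr0 t Ht.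
    pose proof (invariance beta delta K d1 d2 eta1 eta2 f m Hb (proj1 Hd) HK Hd1 Hd2 He1 He2 Hdel Hsol Hr0) as Inv.
    split; [apply Inv; exact Ht|].
    destruct Hsol as [Hf0 [Hm0 Hder]].
    apply (decay f m (fun s => rhs_f beta delta K d1 eta1 (f s) (m s) + rhs_m beta delta K d2 eta2 (f s) (m s))
      c (f 0 + m 0) Hf0 Hm0); [| |reflexivity|exact Ht].
    - intros s Hs. apply (is_derive_plus (K:=R_AbsRing) (V:=R_NormedModule)); apply (Hder s Hs).
    - intros s Hs. apply (decay_point beta delta K d1 d2 eta1 eta2 (f s) (m s) Hb (proj1 Hd) HK Hd1 Hd2 He1 He2 HB HAB).
      apply Inv; lra. }
  split; [|split; [|split]].
  - unfold rhs_f, Lfun, Rdiv. ring.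
  - unfold rhs_m, Lfun, Rdiv. ring.
  - intros eps Heps. exists (eps / 2). split; [lra|].
    intros f m Hsol Hr0 Hr t Ht.
    destruct (KEY f m Hsol Hr0 t Ht) as [[Hft [Hmt _]] HV].
    destruct Hr0 as [Hf0 [Hm0 _]].
    assert (Hsq : forall x y, 0 <= x -> x <= eucl x y).
    { intros x y Hx. unfold eucl. rewrite <- (sqrt_pow2 x Hx) at 1. apply sqrt_le_1_alt.
      assert (0 <= y ^ 2) by (simpl; nra). lra. }
    assert (Hf1 : f 0 <= eucl (f 0) (m 0)) by (apply Hsq; lra).
    assert (Hm1 : m 0 <= eucl (f 0) (m 0)).
    { replace (eucl (f 0) (m 0)) with (eucl (m 0) (f 0)) by (unfold eucl; f_equal; ring). apply Hsq; lra. }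
    assert (Ht1 : eucl (f t) (m t) <= f t + m t).
    { unfold eucl. rewrite <- (sqrt_pow2 (f t + m t)) by lra. apply sqrt_le_1_alt. simpl. nra. }
    assert (exp (- c * t) <= 1).
    { rewrite <- exp_0. destruct (Req_dec t 0) as [->|]; [rewrite Rmult_0_r; lra|].
      left; apply exp_increasing. nra. }
    assert ((f 0 + m 0) * exp (- c * t) <= f 0 + m 0).
    { pose proof (exp_pos (- c * t)). nra. }
    lra.
  - intros f m Hsol Hr0. destruct Hr0 as [Hf0 [Hm0 Hs0]] eqn:E.
    split.
    + apply (lim0 f (f 0 + m 0) c); [lra|lra|]. intros t Ht.
      destruct (KEY f m Hsol Hr0 t Ht) as [[Hft [Hmt _]] HV]. split; lra.
    + apply (lim0 m (f 0 + m 0) c); [lra|lra|]. intros t Ht.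
      destruct (KEY f m Hsol Hr0 t Ht) as [[Hft [Hmt _]] HV]. split; lra.
Qed.
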